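(* Let $k\ge2$. There is a first-order formula $\gamma(x,y,z,t)$ in the group language such that for every $b_1\in Ab$ and all $n,l,m\in\mathbb{Z}$: $BS(1,k)\models\gamma(b_1^n,b_1^l,b_1^m,b_1)$ if and only if $n\cdot l=m$. (That is, multiplication of integers is definable on $\langle b_1\rangle$, identified with $\mathbb{Z}$ via $b_1^m\mapsto m$, with parameter $b_1$.)
   Context: $BS(1,k)=\langle a,b\mid b^{-1}ab=a^k\rangle$, identified with $\mathbb{Z}[1/k]\rtimes\mathbb{Z}$ (pairs $(y,m)$, $y\in\mathbb{Z}[1/k]=\{zk^i:z,i\in\mathbb{Z}\}$, product $(y_1,m_1)(y_2,m_2)=(y_1+y_2k^{-m_1},m_1+m_2)$), with $a=(1,0)$, $b=(0,1)$; $a^y=(y,0)$. $Ab=\{a^yb:y\in\mathbb{Z}[1/k]\}$. *)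

(* Defs.v *)
(* BS(1,k) modelled as Z[1/k] x| Z inside rat * int. *)
From mathcomp Require Import all_boot all_algebra.
Set Implicit Arguments. Unset Strict Implicit. Unset Printing Implicit Defensive.
Import GRing.Theory Num.Theory.
Local Open Scope ring_scope.

Definition inZk (k : nat) (y : rat) : Prop :=
  exists (z i : int), y = z%:~R * (k%:R : rat) ^ i.

Definition bs_mem (k : nat) (g : rat * int) : Prop := inZk k g.1.

Definition bs_mul (k : nat) (g h : rat * int) : rat * int :=
  (g.1 + h.1 * (k%:R : rat) ^ (- g.2), g.2 + h.2).
Definition bs_one : rat * int := (0, 0).
Definition bs_inv (k : nat) (g : rat * int) : rat * int :=
  (- (g.1 * (k%:R : rat) ^ g.2), - g.2).
Definition bs_a : rat * int := (1, 0).
Definition bs_b : rat * int := (0, 1).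
Definition bs_apow (y : rat) : rat * int := (y, 0).

Definition bs_pow (k : nat) (g : rat * int) (n : int) : rat * int :=
  match n with
  | Posz n => iter n (bs_mul k g) bs_one
  | Negz n => iter n.+1 (bs_mul k (bs_inv k g)) bs_one
  end.

Inductive gterm : Type :=
  | tvar of nat
  | tone
  | tmul of gterm & gterm
  | tinv of gterm.

Inductive gform : Type :=
  | feq of gterm & gterm
  | fnot of gform
  | fand of gform & gform
  | forr of gform & gform
  | fimp of gform & gform
  | fex of nat & gform
  | fall of nat & gform.

Definition env := nat -> rat * int.

Definition upd (e : env) (i : nat) (g : rat * int) : env :=
  fun j => if j == i then g else e j.

Fixpoint teval (k : nat) (e : env) (t : gterm) : rat * int :=
  match t with
  | tvar i => e i
  | tone => bs_one
  | tmul s u => bs_mul k (teval k e s) (teval k e u)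
  | tinv s => bs_inv k (teval k e s)
  end.

Fixpoint sat (k : nat) (e : env) (f : gform) : Prop :=
  match f with
  | feq s t => teval k e s = teval k e t
  | fnot f => ~ sat k e f
  | fand f g => sat k e f /\ sat k e g
  | forr f g => sat k e f \/ sat k e g
  | fimp f g => sat k e f -> sat k e g
  | fex i f => exists g, bs_mem k g /\ sat k (upd e i g) f
  | fall i f => forall g, bs_mem k g -> sat k (upd e i g) f
  end.

(* Main.v *)
Require Import Defs.
From mathcomp Require Import all_boot all_order all_algebra.
From mathcomp Require Import ring lra zify.
Import Order.TTheory GRing.Theory Num.Theory.
Set Implicit Arguments. Unset Strict Implicit.
Local Open Scope ring_scope.

Definition Kr (k : nat) : rat := k%:R.
Definition sig (k : nat) (j : int) : rat := (1 - Kr k ^ (- j)) / (1 - (Kr k)^-1).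
Definition Pw (k : nat) (y : rat) (j : int) : rat * int := (y * sig k j, j).

Lemma Kr_gt1 k : (2 <= k)%N -> 1 < Kr k.
Proof. by move=> hk; rewrite /Kr (_ : 1 = 1%:R) // ltr_nat. Qed.
Lemma Kr_neq0 k : (2 <= k)%N -> Kr k != 0.
Proof. by move=> hk; have := Kr_gt1 hk; lra. Qed.
Lemma Kr_den k : (2 <= k)%N -> 1 - (Kr k)^-1 != 0.
Proof.
move=> hk; have h := Kr_gt1 hk.
have : (Kr k)^-1 < 1 by rewrite invf_lt1 //; lra.
lra.
Qed.

Lemma Kr_m1 k : (2 <= k)%N -> Kr k - 1 != 0.
Proof. by move=> hk; have := Kr_gt1 hk; lra. Qed.

Ltac fld hk := rewrite -?/(Kr _); field; rewrite -?/(Kr _) ?(Kr_neq0 hk) ?(Kr_m1 hk) //.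

Lemma expK_eq1 k (j : int) : (2 <= k)%N -> Kr k ^ j = 1 -> j = 0.
Proof.
move=> hk; have h := Kr_gt1 hk.
have h0 : 0 <= Kr k by apply: ltW; apply: lt_trans ltr01 h.
case: j => [[|n]|n] //.
  rewrite /exprz => /eqP; rewrite pexpr_eq1 //.
  by rewrite (gt_eqF h).
rewrite NegzE -exprz_inv /exprz.
move=> /eqP; rewrite pexpr_eq1 ?invr_ge0 //.
by rewrite invr_eq1 (gt_eqF h).
Qed.

Lemma Kz_neq0 k (j : int) : (2 <= k)%N -> Kr k ^ j != 0.
Proof. by move=> hk; rewrite expfz_neq0 // Kr_neq0. Qed.

Lemma Pw_mul k y a b : (2 <= k)%N ->
  bs_mul k (Pw k y a) (Pw k y b) = Pw k y (a + b).
Proof.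
move=> hk; rewrite /bs_mul /Pw /sig /=; congr pair.
rewrite opprD expfzDr ?Kr_neq0 //.
have hd := Kr_den hk.
fld hk.
Qed.

Lemma Pw_inv k y a : (2 <= k)%N -> bs_inv k (Pw k y a) = Pw k y (- a).
Proof.
move=> hk; rewrite /bs_inv /Pw /sig /=; congr pair.
rewrite opprK -invr_expz.
have hx := Kz_neq0 a hk. fld hk.
Qed.

Lemma Pw_one k y : (2 <= k)%N -> bs_one = Pw k y 0.
Proof. by move=> hk; rewrite /Pw /sig oppr0 expr0z subrr mul0r mulr0. Qed.

Lemma Pw_b1 k y : (2 <= k)%N -> bs_mul k (bs_apow y) bs_b = Pw k y 1.
Proof.
move=> hk; rewrite /bs_mul /bs_apow /bs_b /Pw /sig /=; congr pair.
by rewrite exprN1 mul0r addr0 divff ?Kr_den // mulr1.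
Qed.

Lemma Pw_iter k y a (n : nat) : (2 <= k)%N ->
  iter n (bs_mul k (Pw k y a)) bs_one = Pw k y (a * n%:Z).
Proof.
move=> hk; elim: n => [|n IH] /=; first by rewrite mulr0 (Pw_one y hk).
by rewrite IH Pw_mul //; congr (Pw _ _ _); rewrite -addn1 PoszD mulrDr mulr1 addrC.
Qed.

Lemma Pw_pow k y j : (2 <= k)%N ->
  bs_pow k (bs_mul k (bs_apow y) bs_b) j = Pw k y j.
Proof.
move=> hk; rewrite Pw_b1 //; case: j => n; rewrite /bs_pow.
  by rewrite Pw_iter // mul1r.
rewrite Pw_inv // Pw_iter //; congr (Pw _ _ _).
by rewrite NegzE; lia.
Qed.

Lemma inZk_int k (z : int) : inZk k z%:~R.
Proof. by exists z, 0; rewrite expr0z mulr1. Qed.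

Lemma inZk_K k (j : int) : inZk k (Kr k ^ j).
Proof. by exists 1, j; rewrite mul1r. Qed.

Lemma inZk_opp k x : inZk k x -> inZk k (- x).
Proof. by case=> z [i ->]; exists (- z), i; rewrite mulrNz mulNr. Qed.

Lemma inZk_mul k x x' : (2 <= k)%N -> inZk k x -> inZk k x' -> inZk k (x * x').
Proof.
move=> hk [z [i ->]] [z' [i' ->]]; exists (z * z'), (i + i').
rewrite -/(Kr k) expfzDr ?Kr_neq0 // intrM; ring.
Qed.

Lemma inZk_add_aux k (z z' : int) i (d : nat) : (2 <= k)%N ->
  inZk k (z%:~R * Kr k ^ i + z'%:~R * Kr k ^ (i + d%:Z)).
Proof.
move=> hk; exists (z + z' * (k ^ d)%N%:Z), i.
rewrite -/(Kr k) expfzDr ?Kr_neq0 // -exprnP intrD intrM.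
rewrite (_ : ((k ^ d)%N%:Z)%:~R = (k ^ d)%:R :> rat) // natrX; ring.
Qed.

Lemma inZk_add k x x' : (2 <= k)%N -> inZk k x -> inZk k x' -> inZk k (x + x').
Proof.
move=> hk [z [i ->]] [z' [i' ->]].
case: (lerP i i') => hii.
  have := @inZk_add_aux k z z' i `|i' - i|%N hk.
  by rewrite gez0_abs ?subr_ge0 // (_ : i + (i' - i) = i') // addrC subrK.
have := @inZk_add_aux k z' z i' `|i - i'|%N hk.
rewrite gez0_abs ?subr_ge0 ?(ltW hii) // (_ : i' + (i - i') = i); last by rewrite addrC subrK.
by rewrite addrC.
Qed.

Lemma NT2_nat k (n : int) (q : nat) : (2 <= k)%N ->
  exists R, inZk k R /\ R * (Kr k ^ n - 1) = Kr k ^ (q%:Z * n) - 1.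
Proof.
move=> hk; elim: q => [|q [R [hR hE]]].
  by exists 0; split; [exact: (inZk_int k 0) | rewrite mul0r mul0r expr0z subrr].
exists (Kr k ^ n * R + 1); split.
  by apply: inZk_add => //; [apply: inZk_mul => //; exact: inZk_K | exact: (inZk_int k 1)].
rewrite (_ : q.+1%:Z * n = n + q%:Z * n); last by rewrite -addn1 PoszD mulrDl mul1r addrC.
rewrite expfzDr ?Kr_neq0 //.
have -> : Kr k ^ n * Kr k ^ (q%:Z * n) = Kr k ^ n * (R * (Kr k ^ n - 1)) + Kr k ^ n.
  by rewrite hE; ring.
ring.
Qed.

Lemma NT2 k (n q : int) : (2 <= k)%N ->
  exists R, inZk k R /\ R * (Kr k ^ n - 1) = Kr k ^ (q * n) - 1.
Proof.
move=> hk; case: q => q; first exact: NT2_nat.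
have [R [hR hE]] := NT2_nat n q.+1 hk.
exists (- (Kr k ^ (- (q.+1%:Z * n))) * R); split.
  by apply: inZk_mul => //; apply: inZk_opp; exact: inZk_K.
rewrite -mulrA hE NegzE mulNr -invr_expz.
have hx := Kz_neq0 (q.+1%:Z * n) hk.
rewrite (mulNr (q.+1%:Z) n) -invr_expz; by field.
Qed.

Lemma NT3 (k r N : nat) (c : int) : (2 <= k)%N -> (r < N)%N ->
  ((k ^ r)%N%:Z - 1 = c * ((k ^ N)%N%:Z - 1)) -> r = 0%N.
Proof.
move=> hk hr hE.
have h1 : (0 < k ^ r)%N by rewrite expn_gt0; lia.
have h2 : (k ^ r < k ^ N)%N by rewrite ltn_exp2l.
have h3 : (k ^ r)%N = 1%N.
  move: h1 h2 hE; move: (k ^ r)%N (k ^ N)%N => A B h1 h2 hE.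
  have [hc|[hc|hc]] : c = 0 \/ 1 <= c \/ c <= -1 by lia.
  - by move: hE; rewrite hc mul0r; lia.
  - have : c * (B%:Z - 1) >= B%:Z - 1.
      by rewrite -[X in X <= _]mul1r ler_wpM2r //; lia.
    lia.
  - have : c * (B%:Z - 1) <= - (B%:Z - 1).
      by rewrite -(mulN1r (B%:Z - 1)) ler_wpM2r //; lia.
    lia.
case: r hr hE h1 h2 h3 => // r _ _ _ _.
rewrite expnS => h; have : (k <= 1)%N.
  by rewrite -h leq_pmulr // expn_gt0; lia.
lia.
Qed.

Lemma KrX k r : Kr k ^+ r = ((k ^ r)%N%:Z)%:~R :> rat.
Proof. by rewrite /Kr -natrX. Qed.

Lemma PoszX (k n : nat) : (k ^ n)%N%:Z = (k%:Z) ^+ n.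
Proof. by elim: n => [|n IH] //; rewrite expnS exprS PoszM IH. Qed.

Lemma coprime_KN (k N J : nat) : (2 <= k)%N -> (0 < N)%N ->
  coprimez ((k ^ N)%N%:Z - 1) ((k ^ J.+1)%N%:Z).
Proof.
move=> hk hN; rewrite (_ : (k ^ J.+1)%N%:Z = (k%:Z) ^+ J.+1); last by rewrite PoszX.
rewrite coprimez_pexpr //; apply/coprimezP.
exists (-1, (k ^ N.-1)%N%:Z) => /=.
case: N hN => // N _ /=; rewrite expnS PoszM; ring.
Qed.

Lemma intr1q : ((1 : int)%:~R : rat) = 1.
Proof. by []. Qed.

Lemma NT4 k (r N : nat) (w i : int) : (2 <= k)%N -> (0 < N)%N -> (r < N)%N ->
  Kr k ^+ r - 1 = w%:~R * Kr k ^ i * (Kr k ^+ N - 1) -> r = 0%N.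
Proof.
move=> hk hN hr; case: i => j.
  rewrite -exprnP !KrX => hE.
  apply: (@NT3 k r N (w * (k ^ j)%N%:Z)) => //.
  apply: (@intr_inj rat); rewrite !intrB !intrM !intrB /=. exact: hE.
rewrite NegzE -exprz_inv => hE.
have hX : Kr k ^+ j.+1 != 0 by rewrite expf_neq0 // Kr_neq0.
have hE2 : Kr k ^+ j.+1 * (Kr k ^+ r - 1) = w%:~R * (Kr k ^+ N - 1).
  rewrite hE exprz_inv -invr_expz -exprnP; field.
  by rewrite exprnP in hX.
move: hE2; rewrite !KrX => hE2.
have hE3 : (k ^ j.+1)%N%:Z * ((k ^ r)%N%:Z - 1) = w * ((k ^ N)%N%:Z - 1).
  by apply: (@intr_inj rat); rewrite !intrM !intrB; exact: hE2.
have hd : ((k ^ N)%N%:Z - 1 %| (k ^ j.+1)%N%:Z * ((k ^ r)%N%:Z - 1))%Z.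
  by apply/dvdzP; exists w.
rewrite Gauss_dvdzr ?coprime_KN // in hd.
case/dvdzP: hd => c hc.
exact: (@NT3 k r N c).
Qed.

Lemma NT1pos k (N : nat) (m : int) z : (2 <= k)%N -> (0 < N)%N -> inZk k z ->
  z * (Kr k ^ N%:Z - 1) = Kr k ^ m - 1 -> (N%:Z %| m)%Z.
Proof.
move=> hk hN hz hE.
have hN0 : N%:Z != 0 by rewrite eqz_nat -lt0n.
have hm := divz_eq m N%:Z.
have hr0 := modz_ge0 m hN0.
have hrN : (m %% N%:Z)%Z < N%:Z by apply: ltz_pmod; rewrite ltz_nat.
have [r' hr'] : exists r' : nat, (m %% N%:Z)%Z = r'%:Z.
  by exists `|(m %% N%:Z)%Z|%N; rewrite gez0_abs.
rewrite hr' in hm hrN; set q := (m %/ N%:Z)%Z in hm.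
have [R [hR hRE]] := NT2 N%:Z q hk.
have hz' : inZk k (z - Kr k ^ r'%:Z * R).
  by apply: inZk_add => //; apply: inZk_opp; apply: inZk_mul => //; exact: inZk_K.
have hE2 : Kr k ^ r'%:Z - 1 = (z - Kr k ^ r'%:Z * R) * (Kr k ^ N%:Z - 1).
  have : Kr k ^ m = Kr k ^ (q * N%:Z) * Kr k ^ r'%:Z by rewrite {1}hm expfzDr ?Kr_neq0.
  move=> hKm.
  rewrite mulrBl hE hKm -mulrA hRE; ring.
case: hz' hE2 => w [i ->] hE2.
have r0 : r' = 0%N.
  apply: (@NT4 k r' N w i) => //.
apply/dvdzP; exists q; by rewrite hm r0 addr0.
Qed.

Lemma NT1 k (n m : int) z : (2 <= k)%N -> inZk k z ->
  z * (Kr k ^ n - 1) = Kr k ^ m - 1 -> (n %| m)%Z.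
Proof.
move=> hk hz; case: n => [[|N]|N] hE.
- move: hE; rewrite expr0z subrr mulr0 => /eqP; rewrite eq_sym subr_eq0 => /eqP.
  by move/(expK_eq1 hk) => ->.
- by apply: (NT1pos hk _ hz hE).
- have h : (N.+1%:Z %| m)%Z.
    apply: (@NT1pos k N.+1 m (- z * Kr k ^ (Negz N))) => //.
      by apply: inZk_mul => //; [apply: inZk_opp | apply: inZk_K].
    rewrite -hE NegzE -invr_expz.
    have hx := Kz_neq0 (N.+1%:Z) hk.
    by field.
  by rewrite NegzE; move: h; rewrite /dvdz abszN.
Qed.

Lemma sig1 k : (2 <= k)%N -> sig k 1 = 1.
Proof. by move=> hk; rewrite /sig exprN1 divff ?Kr_den. Qed.

Lemma comm_b1 k y (g : rat * int) : (2 <= k)%N ->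
  (bs_mul k g (Pw k y 1) = bs_mul k (Pw k y 1) g) <-> g = Pw k y g.2.
Proof.
move=> hk; split; last first.
  by move=> ->; rewrite /= !Pw_mul // addrC.
case: g => x p; rewrite /bs_mul /Pw /= sig1 // !mulr1 => /(congr1 fst) /= h1.
congr pair.
have hd := Kr_den hk.
have e : x * (1 - (Kr k)^-1) = y * (1 - Kr k ^ (- p)).
  rewrite -/(Kr k) exprN1 in h1; lra.
apply: (mulIf hd); rewrite e /sig. fld hk.
Qed.

Lemma comm_lvl0 k (x x' : rat) : bs_mul k (x, 0) (x', 0) = bs_mul k (x', 0) (x, 0).
Proof. by rewrite /bs_mul /= oppr0 expr0z !mulr1 addrC. Qed.

Lemma inN_sem k y (g : rat * int) : (2 <= k)%N ->
  let t := Pw k y 1 in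
  let c := bs_mul k (bs_mul k t g) (bs_inv k t) in
  (bs_mul k g c = bs_mul k c g /\
   (bs_mul k g t = bs_mul k t g -> g = bs_one)) <-> g.2 = 0.
Proof.
case: g => x p hk t c /=; split.
  case=> hc himp.
  case: (eqVneq p 0) => // hp.
  suff : bs_mul k (x, p) t = bs_mul k t (x, p) by move/himp => [].
  move: hc; rewrite /c /t /bs_mul /bs_inv /Pw sig1 // !mulr1 /=.
  rewrite (_ : 1 + p + - 1 = p); last by rewrite addrC addKr.
  move=> /(congr1 fst) /= hc; rewrite -/(Kr k) in hc.
  set x' := y + x * Kr k ^ (-1) + - (y * Kr k ^ 1) * Kr k ^ (- (1 + p)) in hc.
  have hKp : Kr k ^ (- p) != 1.
    by apply/eqP => /(expK_eq1 hk) /eqP; rewrite oppr_eq0 (negPf hp).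
  have hxx : x = x'.
    have : (x - x') * (1 - Kr k ^ (- p)) = 0.
      have -> : (x - x') * (1 - Kr k ^ (- p)) =
        (x + x' * Kr k ^ (- p)) - (x' + x * Kr k ^ (- p)) by ring.
      by rewrite hc subrr.
    have hK1 : (1 == Kr k ^ (- p)) = false by rewrite eq_sym (negPf hKp).
    by move/eqP; rewrite mulf_eq0 !subr_eq0 hK1 orbF => /eqP.
  congr pair; last by rewrite addrC.
  rewrite {1}hxx /x' -/(Kr k).
  have hK := Kr_neq0 hk.
  rewrite (opprD 1 p) expfzDr // expr1z exprN1. fld hk.
move=> hp; subst p; split.
  have hc2 : c = (c.1, 0) by rewrite /c /=; congr pair; rewrite addr0 addrN.
  by rewrite hc2 comm_lvl0.
move/(comm_b1 _ _ hk) => -> /=; by rewrite -(Pw_one y hk).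
Qed.

Lemma conj_lvl0 k (Y x : rat) (m : int) : (2 <= k)%N ->
  bs_mul k (bs_mul k (bs_mul k (bs_inv k (Y, m)) (x, 0)) (Y, m)) (bs_inv k (x, 0))
  = (x * (Kr k ^ m - 1), 0).
Proof.
move=> hk; rewrite /bs_mul /bs_inv /=; congr pair; last by rewrite addr0 subr0 addNr.
rewrite !addr0 addNr oppr0 !opprK !expr0z !mulr1 -/(Kr k); ring.
Qed.

Lemma DZ k (n m : int) : (2 <= k)%N ->
  (forall x, inZk k x -> exists z, inZk k z /\ z * (Kr k ^ n - 1) = x * (Kr k ^ m - 1))
  <-> (n %| m)%Z.
Proof.
move=> hk; split.
  move=> /(_ 1 (inZk_int k 1)) [z [hz hE]].
  by apply: (NT1 hk hz); rewrite hE mul1r.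
case/dvdzP => q -> x hx.
have [R [hR hRE]] := NT2 n q hk.
exists (x * R); split; first exact: inZk_mul.
by rewrite -mulrA hRE.
Qed.

Lemma Pw_mem k y j : (2 <= k)%N -> inZk k y -> bs_mem k (Pw k y j).
Proof.
move=> hk hy; rewrite /bs_mem /Pw /=.
have [R [hR hRE]] := NT2 (-1) j hk.
suff -> : sig k j = R by apply: inZk_mul.
have hd : Kr k ^ (-1) - 1 != 0.
  by rewrite exprN1 -oppr_eq0 opprB Kr_den.
apply: (mulIf hd); rewrite hRE /sig exprN1 mulrN1.
fld hk.
Qed.

Fixpoint fresh (i : nat) (t : gterm) : bool :=
  match t with
  | tvar j => j != i
  | tone => true
  | tmul s u => fresh i s && fresh i u
  | tinv s => fresh i s
  end.

Lemma teval_upd k e i g t : fresh i t -> teval k (upd e i g) t = teval k e t.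
Proof.
elim: t => [j|| s IHs u IHu | s IHs] //=.
- by rewrite /upd => /negPf ->.
- by case/andP => /IHs -> /IHu ->.
- by move=> /IHs ->.
Qed.

Lemma upd_eq e i g : upd e i g i = g.
Proof. by rewrite /upd eqxx. Qed.
Lemma upd_neq e i j g : j != i -> upd e i g j = e j.
Proof. by rewrite /upd => /negPf ->. Qed.
Lemma upd_mem k e i g : (forall j, bs_mem k (e j)) -> bs_mem k g ->
  forall j, bs_mem k (upd e i g j).
Proof. by move=> he hg j; rewrite /upd; case: (j == i). Qed.

Arguments upd : simpl never.
Arguments bs_mul : simpl never.
Arguments bs_inv : simpl never.
Arguments Pw : simpl never.

Definition tT := tvar 3.
Definition comm (s u : gterm) := feq (tmul s u) (tmul u s).
Definition inN (u : gterm) :=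
  fand (comm u (tmul (tmul tT u) (tinv tT))) (fimp (comm u tT) (feq u tone)).
Definition inC u := comm u tT.

Lemma sat_inN k y e u : (2 <= k)%N -> e 3%N = Pw k y 1 ->
  sat k e (inN u) <-> (teval k e u).2 = 0.
Proof. by move=> hk he3; rewrite -(@inN_sem k y _ hk) /= he3. Qed.

Lemma sat_inC k y e u : (2 <= k)%N -> e 3%N = Pw k y 1 ->
  sat k e (inC u) <-> teval k e u = Pw k y (teval k e u).2.
Proof. by move=> hk he3; rewrite -(@comm_b1 k y _ hk) /= he3. Qed.

Definition conjt (g v : gterm) := tmul (tmul (tmul (tinv g) v) g) (tinv v).
Definition fD (g h : gterm) :=
  fall 8 (fimp (inN (tvar 8))
    (fex 9 (fand (inN (tvar 9)) (feq (conjt g (tvar 9)) (conjt h (tvar 8)))))).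

Lemma sat_D k y e g h n m : (2 <= k)%N -> e 3%N = Pw k y 1 ->
  fresh 8 g -> fresh 9 g -> fresh 8 h -> fresh 9 h ->
  teval k e g = Pw k y n -> teval k e h = Pw k y m ->
  sat k e (fD g h) <-> (n %| m)%Z.
Proof.
move=> hk he3 f8g f9g f8h f9h hg hh.
rewrite -(DZ n m hk) /fD; cbn [sat].
have e3 : forall e' i gg, i != 3%N -> e' 3%N = Pw k y 1 -> upd e' i gg 3%N = Pw k y 1.
  by move=> e' i gg hi he; rewrite upd_neq // eq_sym.
have he8 : forall u, upd e 8 u 3%N = Pw k y 1 by move=> u; apply: e3.
have he89 : forall u v, upd (upd e 8 u) 9 v 3%N = Pw k y 1 by move=> u v; apply: e3.
have tg : forall u v, teval k (upd (upd e 8 u) 9 v) g = Pw k y n.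
  by move=> u v; rewrite !teval_upd.
have th : forall u v, teval k (upd (upd e 8 u) 9 v) h = Pw k y m.
  by move=> u v; rewrite !teval_upd.
have v9 : forall u v, upd (upd e 8 u) 9 v 9 = v by move=> u v; rewrite upd_eq.
have v8 : forall u v, upd (upd e 8 u) 9 v 8 = u by move=> u v; rewrite upd_neq // upd_eq.
split.
- move=> H x hx.
  have := H (x, 0) hx; rewrite (sat_inN _ hk (he8 _)); cbn [teval].
  rewrite (upd_eq e 8 (x, 0)) => /(_ erefl).
  case=> v [hv []]; rewrite (sat_inN _ hk (he89 _ _)); cbn [teval]; rewrite v9 => hv2.
  rewrite /conjt; cbn [teval]; rewrite tg th v9 v8.
  case: v hv hv2 => z p hv /= hp; subst p.
  rewrite /Pw !conj_lvl0 // => [[heq]].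
  by exists z.
move=> H u hu; rewrite (sat_inN _ hk (he8 _)); cbn [teval]; rewrite (upd_eq e 8 u).
case: u hu => x p hu /= hp; subst p.
have [z [hz heq]] := H x hu.
exists (z, 0); split; first exact: hz.
split; first by apply/(sat_inN (tvar 9) hk (he89 _ _)); cbn [teval]; rewrite v9.
by rewrite /conjt; cbn [teval]; rewrite tg th v9 v8 /Pw !conj_lvl0 // heq.
Qed.

Definition fiff f g := fand (fimp f g) (fimp g f).
Definition fL a b c :=
  fall 7 (fimp (inC (tvar 7)) (fiff (fand (fD a (tvar 7)) (fD b (tvar 7))) (fD c (tvar 7)))).

Lemma sat_L k y e a b c na nb nc : (2 <= k)%N -> inZk k y -> e 3%N = Pw k y 1 ->
  [&& fresh 7 a, fresh 8 a & fresh 9 a] -> [&& fresh 7 b, fresh 8 b & fresh 9 b] ->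
  [&& fresh 7 c, fresh 8 c & fresh 9 c] ->
  teval k e a = Pw k y na -> teval k e b = Pw k y nb -> teval k e c = Pw k y nc ->
  sat k e (fL a b c) <->
  (forall j : int, (na %| j)%Z /\ (nb %| j)%Z <-> (nc %| j)%Z).
Proof.
move=> hk hy he3 /and3P [a7 a8 a9] /and3P [b7 b8 b9] /and3P [c7 c8 c9] ha hb hc.
have he7 : forall d, upd e 7 d 3%N = Pw k y 1 by move=> d; rewrite upd_neq.
have hd7 : forall j, teval k (upd e 7 (Pw k y j)) (tvar 7) = Pw k y j.
  by move=> j; cbn [teval]; rewrite (upd_eq e 7).
have sD : forall t nt j, fresh 7 t -> fresh 8 t -> fresh 9 t -> teval k e t = Pw k y nt ->
   sat k (upd e 7 (Pw k y j)) (fD t (tvar 7)) <-> (nt %| j)%Z.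
  move=> t nt j t7 t8 t9 ht.
  apply: (@sat_D k y _ t (tvar 7) nt j hk (he7 _)) => //; first by rewrite teval_upd.
rewrite /fL /fiff; cbn [sat]; split.
  move=> H j.
  have := H (Pw k y j) (Pw_mem j hk hy).
  have hC : sat k (upd e 7 (Pw k y j)) (inC (tvar 7)).
    by apply/(sat_inC (tvar 7) hk (he7 _)); rewrite hd7.
  move=> /(_ hC) []; rewrite (sD a na) // (sD b nb) // (sD c nc) //.
move=> H d hd /(sat_inC (tvar 7) hk (he7 _)).
cbn [teval]; rewrite (upd_eq e 7) => hdP.
rewrite hdP (sD a na) // (sD b nb) // (sD c nc) //.
by have [h1 h2] := H d.2; split.
Qed.

Lemma dvdz_pm (a b : int) : (a %| b)%Z -> (b %| a)%Z -> a = b \/ a = - b.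
Proof.
rewrite /dvdz /= !unfold_in => h1 h2.
have h : `|a|%N = `|b|%N by apply/eqP; rewrite eqn_dvd h1 h2.
lia.
Qed.

Lemma cop (n : int) : coprimez n (n + 1).
Proof. by apply/coprimezP; exists (-1, 1) => /=; ring. Qed.

Lemma dvd_prod (n j : int) : (n %| j)%Z /\ (n + 1 %| j)%Z <-> (n * (n + 1) %| j)%Z.
Proof. by rewrite Gauss_dvdz ?cop //; split => [[-> ->]|/andP]. Qed.

Lemma dvdNz' (a b : int) : (- a %| b)%Z = (a %| b)%Z.
Proof. by rewrite /dvdz /= !unfold_in abszN. Qed.

Definition Lp (n c : int) := forall j : int, (n %| j)%Z /\ (n + 1 %| j)%Z <-> (c %| j)%Z.

Lemma Lp_char n c : Lp n c <-> (c = n * (n + 1) \/ c = - (n * (n + 1))).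
Proof.
split.
  move=> H; apply: dvdz_pm.
    by apply/H; rewrite dvd_prod.
  by apply/dvd_prod/H.
by move=> hc j; rewrite dvd_prod; case: hc => ->; rewrite ?dvdNz'.
Qed.

Lemma Qint x c : (exists j, Lp x c /\ Lp (x + 1) j /\ j = c + (x + 1) + (x + 1))
  <-> c = x * (x + 1).
Proof.
split.
  case=> j [/Lp_char h1 [/Lp_char h2 h3]].
  case: h1 => h1; case: h2 => h2 //; nia.
move=> hc; exists ((x + 1) * (x + 1 + 1)); split; first by apply/Lp_char; left.
split; first by apply/Lp_char; left.
rewrite hc; ring.
Qed.

Lemma teval_mul k e s u : teval k e (tmul s u) = bs_mul k (teval k e s) (teval k e u).
Proof. by []. Qed.
Lemma teval_var k e i : teval k e (tvar i) = e i.
Proof. by []. Qed.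

Definition fQ X C :=
  fex 6 (fand (inC (tvar 6))
    (fand (fL X (tmul X tT) C)
      (fand (fL (tmul X tT) (tmul (tmul X tT) tT) (tvar 6))
        (feq (tvar 6) (tmul (tmul C (tmul X tT)) (tmul X tT)))))).

Lemma sat_Q k y e X C x c : (2 <= k)%N -> inZk k y -> e 3%N = Pw k y 1 ->
  fresh 6 X -> fresh 7 X -> fresh 8 X -> fresh 9 X ->
  fresh 6 C -> fresh 7 C -> fresh 8 C -> fresh 9 C ->
  teval k e X = Pw k y x -> teval k e C = Pw k y c ->
  sat k e (fQ X C) <-> c = x * (x + 1).
Proof.
move=> hk hy he3 X6 X7 X8 X9 C6 C7 C8 C9 hX hC.
rewrite -Qint /fQ; cbn [sat].
have he6 : forall d, upd e 6 d 3%N = Pw k y 1 by move=> d; rewrite upd_neq.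
have tX : forall d, teval k (upd e 6 d) X = Pw k y x by move=> d; rewrite teval_upd.
have tC : forall d, teval k (upd e 6 d) C = Pw k y c by move=> d; rewrite teval_upd.
have tXt : forall d, teval k (upd e 6 d) (tmul X tT) = Pw k y (x + 1).
  by move=> d; rewrite teval_mul tX /tT teval_var he6 Pw_mul.
have tXtt : forall d, teval k (upd e 6 d) (tmul (tmul X tT) tT) = Pw k y (x + 1 + 1).
  by move=> d; rewrite teval_mul tXt /tT teval_var he6 Pw_mul.
have t6 : forall d, teval k (upd e 6 d) (tvar 6) = d by move=> d; cbn [teval]; rewrite (upd_eq e 6).
have L1 : forall d, sat k (upd e 6 d) (fL X (tmul X tT) C) <-> Lp x c.
  by move=> d; rewrite /Lp; apply: (sat_L hk hy (he6 d)); rewrite ?tX ?tXt ?tC //= ?X7 ?X8 ?X9 ?C7 ?C8 ?C9.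
have L2 : forall j, sat k (upd e 6 (Pw k y j)) (fL (tmul X tT) (tmul (tmul X tT) tT) (tvar 6))
    <-> Lp (x + 1) j.
  by move=> j; rewrite /Lp; apply: (sat_L hk hy (he6 _)); rewrite ?tXt ?tXtt ?t6 //= ?X7 ?X8 ?X9.
have tE : forall d, teval k (upd e 6 d) (tmul (tmul C (tmul X tT)) (tmul X tT))
    = Pw k y (c + (x + 1) + (x + 1)).
  by move=> d; rewrite teval_mul (teval_mul _ _ C) tC tXt !Pw_mul.
split.
  case=> d [hd [/(sat_inC (tvar 6) hk (he6 _))]]; rewrite t6 => hdP.
  rewrite hdP L1 L2 tE.
  case=> h1 [h2 h3]; exists d.2; split => //; split => //.
  by move: h3; rewrite /Pw => /(congr1 snd).
case=> j [h1 [h2 h3]].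
exists (Pw k y j); split; first exact: Pw_mem.
split; first by apply/(sat_inC (tvar 6) hk (he6 _)); rewrite t6.
rewrite L1 L2; split => //; split => //.
by rewrite t6 tE h3.
Qed.

Lemma mainint (n l m : int) :
  (exists a b, a = (n + l) * (n + l + 1) /\ b = (n + - l) * (n + - l + 1) /\
     m + m + m + m + l + l + b = a) <-> n * l = m.
Proof.
split.
  by case=> a [b [-> [-> h]]]; nia.
move=> <-; exists ((n + l) * (n + l + 1)), ((n + - l) * (n + - l + 1)).
by split => //; split => //; ring.
Qed.

Lemma teval_inv k e s : teval k e (tinv s) = bs_inv k (teval k e s).
Proof. by []. Qed.

Definition tx := tvar 0.
Definition ty := tvar 1.
Definition tz := tvar 2.
Definition gamma :=
  fex 4 (fand (inC (tvar 4)) (fex 5 (fand (inC (tvar 5))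
    (fand (fQ (tmul tx ty) (tvar 4))
    (fand (fQ (tmul tx (tinv ty)) (tvar 5))
      (feq (tmul (tmul (tmul (tmul (tmul (tmul tz tz) tz) tz) ty) ty) (tvar 5)) (tvar 4))))))).

Theorem lemma4p6 (k : nat) (hk : (2 <= k)%N) :
  exists gamma : gform,
    forall (y : rat), inZk k y ->
    let b1 := bs_mul k (bs_apow y) bs_b in
    forall (n l m : int) (e : env),
      (forall j, bs_mem k (e j)) ->
      e 0%N = bs_pow k b1 n -> e 1%N = bs_pow k b1 l ->
      e 2%N = bs_pow k b1 m -> e 3%N = b1 ->
      (sat k e gamma <-> n * l = m).
Proof.
exists gamma => y hy b1 n l m e hmem h0 h1 h2 h3.
rewrite /b1 !Pw_pow // in h0 h1 h2; rewrite /b1 Pw_b1 // in h3.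
rewrite -mainint /gamma; cbn [sat].
set E := fun A B => upd (upd e 4 A) 5 B.
have E3 : forall A B, E A B 3%N = Pw k y 1 by move=> A B; rewrite /E; cbv beta; rewrite !upd_neq.
have E0 : forall A B, teval k (E A B) tx = Pw k y n by move=> A B; rewrite /E; cbv beta; rewrite !teval_upd.
have E1 : forall A B, teval k (E A B) ty = Pw k y l by move=> A B; rewrite /E; cbv beta; rewrite !teval_upd.
have E2 : forall A B, teval k (E A B) tz = Pw k y m by move=> A B; rewrite /E; cbv beta; rewrite !teval_upd.
have E4 : forall A B, teval k (E A B) (tvar 4) = A.
  by move=> A B; rewrite /E; cbv beta; rewrite teval_var upd_neq // (upd_eq e 4 A).
have E5 : forall A B, teval k (E A B) (tvar 5) = B.
  by move=> A B; rewrite /E; cbv beta; rewrite teval_var (upd_eq (upd e 4 A) 5 B).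
have Q1 : forall a B, sat k (E (Pw k y a) B) (fQ (tmul tx ty) (tvar 4)) <->
    a = (n + l) * (n + l + 1).
  move=> a B; apply: (sat_Q hk hy (E3 _ _)) => //.
    by rewrite teval_mul E0 E1 Pw_mul.
have Q2 : forall A b, sat k (E A (Pw k y b)) (fQ (tmul tx (tinv ty)) (tvar 5)) <->
    b = (n + - l) * (n + - l + 1).
  move=> A b; apply: (sat_Q hk hy (E3 _ _)) => //.
  by rewrite teval_mul E0 teval_inv E1 Pw_inv // Pw_mul.
have EQ : forall a b, teval k (E (Pw k y a) (Pw k y b))
   (tmul (tmul (tmul (tmul (tmul (tmul tz tz) tz) tz) ty) ty) (tvar 5))
   = Pw k y (m + m + m + m + l + l + b).
  by move=> a b; rewrite !teval_mul E2 E1 E5 !Pw_mul.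
split.
  case=> A [hA [hAC [B [hB [hBC [hq1 [hq2 heq]]]]]]].
  have e43 : upd e 4 A 3%N = Pw k y 1 by rewrite upd_neq.
  have hA' : A = Pw k y A.2.
    have h := (sat_inC (tvar 4) hk e43).1 hAC.
    by rewrite teval_var (upd_eq e 4 A) in h.
  have hB' : B = Pw k y B.2.
    have h := (sat_inC (tvar 5) hk (E3 A B)).1 hBC.
    rewrite /E in h; cbv beta in h.
    by rewrite teval_var (upd_eq (upd e 4 A) 5 B) in h.
  exists A.2, B.2.
  have q1 := (Q1 A.2 B).1; rewrite /E in q1; cbv beta in q1; rewrite -hA' in q1.
  have q2 := (Q2 A (B.2)).1; rewrite /E in q2; cbv beta in q2; rewrite -hB' in q2.
  split; first exact: q1.
  split; first exact: q2.
  have := EQ A.2 B.2; rewrite /E; cbv beta; rewrite -hA' -hB' heq teval_var upd_neq // (upd_eq e 4 A) => hh.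
  by move: hh; rewrite {1}hA' /Pw => /(congr1 snd).
case=> a [b [ha [hb hab]]].
exists (Pw k y a); split; first exact: Pw_mem.
split.
  have e43 : upd e 4 (Pw k y a) 3%N = Pw k y 1 by rewrite upd_neq.
  by apply/(sat_inC (tvar 4) hk e43); rewrite teval_var (upd_eq e 4 (Pw k y a)).
exists (Pw k y b); split; first exact: Pw_mem.
split.
  by apply/(sat_inC (tvar 5) hk (E3 _ _)); rewrite /E; cbv beta; rewrite teval_var (upd_eq (upd e 4 (Pw k y a)) 5 (Pw k y b)).
split; first exact/Q1.
split; first exact/Q2.
have := EQ a b; rewrite /E; cbv beta => ->.
by rewrite teval_var upd_neq // (upd_eq e 4 (Pw k y a)) hab.
Qed.
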